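(* Let $A$ be a Noetherian ring, $\mathcal{R}$ a standard graded ring with $\mathcal{R}_0=A$, and let $X\in\operatorname{^*Mod}_f(\mathcal{R})$ be quasi-finite. Then $\operatorname{Ass}_A X_n\subseteq\operatorname{Ass}_A X_{n+1}$ for all $n\gg0$.
   Context: A standard graded ring $\mathcal{R}=\bigoplus_{n\ge0}\mathcal{R}_n$ with $\mathcal{R}_0=A$ is a Noetherian $\mathbb{N}$-graded commutative ring generated as an $A$-algebra by finitely many elements of $\mathcal{R}_1$; $\mathcal{R}_+=\bigoplus_{n\ge1}\mathcal{R}_n$. $\operatorname{^*Mod}_f(\mathcal{R})$ is the full subcategory of graded $\mathcal{R}$-modules $X=\bigoplus_{n\in\mathbb{Z}}X_n$ with every $X_n$ a finitely generated $A$-module and $X_n=0$ for $n\ll0$. $H^0_{\mathcal{R}_+}(X)=\{x\in X:\mathcal{R}_+^k x=0\text{ for some }k\}$. A module $X\in\operatorname{^*Mod}_f(\mathcal{R})$ is quasi-finite if $H^0_{\mathcal{R}_+}(X)_n=0$ for all $n\gg0$. *)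

(* Defs.v *)
From HB Require Import structures.
From mathcomp Require Import all_boot all_order all_algebra.
Set Implicit Arguments. Unset Strict Implicit. Unset Printing Implicit Defensive.
Import Order.TTheory GRing.Theory Num.Theory.
Local Open Scope ring_scope.

Definition is_ideal (A : comPzRingType) (I : A -> Prop) : Prop :=
  I 0 /\ (forall x y, I x -> I y -> I (x + y)) /\ (forall a x, I x -> I (a * x)).

Definition fg_ideal (A : comPzRingType) (I : A -> Prop) : Prop :=
  exists s : seq A, (forall x, x \in s -> I x) /\
    forall x, I x -> exists c : 'I_(size s) -> A, x = \sum_(i < size s) c i * s`_i.

Definition noetherian_ring (A : comPzRingType) : Prop :=
  forall I : A -> Prop, is_ideal I -> fg_ideal I.

Definition prime_ideal (A : comPzRingType) (P : A -> Prop) : Prop :=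
  is_ideal P /\ ~ P 1 /\ forall a b, P (a * b) -> P a \/ P b.

Definition zmod_closedP (V : zmodType) (P : V -> Prop) : Prop :=
  P 0 /\ forall x y, P x -> P y -> P (x - y).

(* S = (+)_{n >= 0} Sd n, an N-graded commutative ring (internal direct sum). *)
Definition graded_ring (S : comPzRingType) (Sd : nat -> S -> Prop) : Prop :=
  (forall n, zmod_closedP (Sd n)) /\
  Sd 0%N 1 /\
  (forall m n a b, Sd m a -> Sd n b -> Sd (m + n)%N (a * b)) /\
  (forall r, exists (N : nat) (f : nat -> S),
      (forall n, Sd n (f n)) /\ r = \sum_(n < N) f n) /\
  (forall (N : nat) (f : nat -> S), (forall n, Sd n (f n)) ->
      \sum_(n < N) f n = 0 -> forall n, (n < N)%N -> f n = 0).

Definition in_Rplus (S : comPzRingType) (Sd : nat -> S -> Prop) (r : S) : Prop :=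
  exists (N : nat) (f : nat -> S),
    (forall n, Sd n (f n)) /\ r = \sum_(1 <= n < N) f n.

(* Standard graded ring with R_0 = A (A identified with R_0 via the ring
   isomorphism phi : A -> R_0): Noetherian, N-graded, generated as an
   A-algebra by finitely many elements of R_1. *)
Definition standard_graded (A S : comPzRingType) (phi : {rmorphism A -> S})
    (Sd : nat -> S -> Prop) : Prop :=
  graded_ring Sd /\ noetherian_ring S /\
  injective phi /\ (forall r, Sd 0%N r <-> exists a, r = phi a) /\
  exists s : seq S, (forall r, r \in s -> Sd 1%N r) /\
    forall P : S -> Prop,
      (forall a, P (phi a)) -> (forall r, r \in s -> P r) ->
      (forall x y, P x -> P y -> P (x + y)) ->
      (forall x y, P x -> P y -> P (x * y)) -> forall r, P r.

(* X = (+)_{n in Z} Xd n, a Z-graded S-module (internal direct sum). *)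
Definition graded_module (S : comPzRingType) (Sd : nat -> S -> Prop)
    (X : lmodType S) (Xd : int -> X -> Prop) : Prop :=
  (forall n, zmod_closedP (Xd n)) /\
  (forall m n r x, Sd m r -> Xd n x -> Xd (m%:Z + n) (r *: x)) /\
  (forall x, exists (lo : int) (N : nat) (f : int -> X),
      (forall n, Xd n (f n)) /\ x = \sum_(i < N) f (lo + i%:Z)) /\
  (forall (lo : int) (N : nat) (f : int -> X), (forall n, Xd n (f n)) ->
      \sum_(i < N) f (lo + i%:Z) = 0 ->
      forall i, (i < N)%N -> f (lo + i%:Z) = 0).

Definition fg_Asubmodule (A S : comPzRingType) (phi : {rmorphism A -> S})
    (X : lmodType S) (P : X -> Prop) : Prop :=
  exists s : seq X, (forall x, x \in s -> P x) /\
    forall x, P x -> exists c : 'I_(size s) -> A,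
      x = \sum_(i < size s) phi (c i) *: s`_i.

Definition in_ModF (A S : comPzRingType) (phi : {rmorphism A -> S})
    (Sd : nat -> S -> Prop) (X : lmodType S) (Xd : int -> X -> Prop) : Prop :=
  graded_module Sd Xd /\ (forall n, fg_Asubmodule phi (Xd n)) /\
  exists n0 : int, forall n, n < n0 -> forall x, Xd n x -> x = 0.

(* x in H^0_{R_+}(X): R_+^k x = 0 for some k, i.e. every product of k
   elements of R_+ kills x. *)
Definition in_H0_Rplus (S : comPzRingType) (Sd : nat -> S -> Prop)
    (X : lmodType S) (x : X) : Prop :=
  exists k : nat, forall rs : seq S, size rs = k ->
    (forall r, r \in rs -> in_Rplus Sd r) -> (\prod_(r <- rs) r) *: x = 0.

Definition quasi_finite (S : comPzRingType) (Sd : nat -> S -> Prop)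
    (X : lmodType S) (Xd : int -> X -> Prop) : Prop :=
  exists n0 : int, forall n, n0 <= n ->
    forall x, Xd n x -> in_H0_Rplus Sd x -> x = 0.

Definition in_Ass (A S : comPzRingType) (phi : {rmorphism A -> S})
    (X : lmodType S) (Xd : int -> X -> Prop) (n : int) (P : A -> Prop) : Prop :=
  prime_ideal P /\ exists x, Xd n x /\ forall a, P a <-> phi a *: x = 0.

(* Main.v *)
Require Import Defs.
From HB Require Import structures.
From mathcomp Require Import all_boot all_order all_algebra.
From mathcomp Require Import zify.
From Stdlib Require Import Classical.
Import Order.TTheory GRing.Theory Num.Theory.
Local Open Scope ring_scope.

Lemma graded_disj (S : comPzRingType) (Sd : nat -> S -> Prop) (X : lmodType S)
   (Xd : int -> X -> Prop) (n : int) (d : nat) (z : X) :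
  graded_module Sd Xd -> Xd n z -> Xd (d.+1%:Z + n) z -> z = 0.
Proof.
move=> [Hz [_ [_ Hu]]] Hn Hd.
pose f := fun m : int => if m == n then z else if m == n + d.+1%:Z then - z else 0.
have Hf : forall m, Xd m (f m).
  move=> m; rewrite /f; case: eqP => [->//|_]; case: eqP => [->|_].
    have [H0 Hs] := Hz (n + d.+1%:Z).
    rewrite -(sub0r z); apply: Hs => //; by rewrite addrC.
  by case: (Hz m).
have Hsum : \sum_(i < d.+2) f (n + i%:Z) = 0.
  rewrite big_ord_recr big_ord_recl /= big1.
    rewrite /f /=.
    have -> : (n + 0%N%:Z == n) = true by apply/eqP; lia.
    idtac.
    have -> : (n + (d.+1)%:Z == n) = false by apply/eqP; lia.
    by rewrite eqxx addr0 addrN.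
  move=> i _; rewrite /f /=.
  have -> : (n + (bump 0 i)%:Z == n) = false by apply/eqP; rewrite /bump /=; lia.
  have -> : (n + (bump 0 i)%:Z == n + d.+1%:Z) = false.
    by apply/eqP; have := ltn_ord i; rewrite /bump /=; lia.
  by [].
have := Hu n d.+2 f Hf Hsum 0%N isT.
by rewrite /f addr0 eqxx.
Qed.

Lemma scale_comm (S : comPzRingType) (X : lmodType S) (r t : S) (x : X) :
  r *: (t *: x) = t *: (r *: x).
Proof. by rewrite !scalerA mulrC. Qed.

Lemma list_prod (A S : comPzRingType) (phi : {rmorphism A -> S}) (X : lmodType S)
  (P : A -> Prop) (x : X) (s : seq S) :
  prime_ideal P ->
  (forall r, r \in s -> exists a, ~ P a /\ phi a *: (r *: x) = 0) ->
  exists a, ~ P a /\ forall r, r \in s -> phi a *: (r *: x) = 0.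
Proof.
move=> [[HP0 [HPD HPM]] [HP1 HPp]].
elim: s => [|r s IH] H.
  by exists 1; split => // r.
have [a1 [Ha1 Hr]] := H r (mem_head _ _).
have [a2 [Ha2 Hs]] : exists a, ~ P a /\ forall r, r \in s -> phi a *: (r *: x) = 0.
  by apply: IH => t ts; apply: H; rewrite inE ts orbT.
exists (a1 * a2); split.
  by move=> /HPp [].
move=> t; rewrite inE => /orP [/eqP ->|ts].
  by rewrite rmorphM [_ * phi a2]mulrC -scalerA Hr scaler0.
  by rewrite rmorphM -scalerA (Hs t ts) scaler0.
Qed.

Theorem proposition4p2 (A S : comPzRingType) (phi : {rmorphism A -> S})
    (Sd : nat -> S -> Prop) (X : lmodType S) (Xd : int -> X -> Prop) :
  noetherian_ring A -> standard_graded phi Sd -> in_ModF phi Sd Xd ->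
  quasi_finite Sd Xd ->
  exists N : int, forall n : int, N <= n ->
    forall P : A -> Prop, in_Ass phi Xd n P -> in_Ass phi Xd (n + 1) P.
Proof.
move=> _ [Hgr [_ [_ [Hphi0 [s [Hs1 Hind]]]]]] [Hgm _] [n0 Hq].
have Hgm' := Hgm; move: Hgm' => [Hz [Hmul _]].
exists n0 => n Hn P [HP [x [Hx Hann]]].
split => //.
case: (classic (exists r, r \in s /\ forall a, P a <-> phi a *: (r *: x) = 0)).
  move=> [r [rs Hr]]; exists (r *: x); split => //.
  by rewrite addrC; apply: (Hmul 1%N) => //; apply: Hs1.
move=> Hno; exfalso.
have Hex : forall r, r \in s -> exists a, ~ P a /\ phi a *: (r *: x) = 0.
  move=> r rs; apply: NNPP => Hc; apply: Hno; exists r; split => // a.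
  split.
    by move=> /Hann Ha; rewrite scale_comm Ha scaler0.
  move=> Ha; apply: NNPP => HPa; apply: Hc; by exists a.
have [a [HPa Ha]] := @list_prod A S phi X P x s HP Hex.
pose y := phi a *: x.
have Hy : Xd n y.
  have := Hmul 0%N n (phi a) x; rewrite add0r; apply => //.
  by apply/Hphi0; exists a.
have Hsy : forall r, r \in s -> r *: y = 0.
  by move=> r rs; rewrite /y scale_comm Ha.
have Hall : forall t : S, exists c, t *: y = phi c *: y.
  apply: Hind.
  - by move=> c; exists c.
  - by move=> r rs; exists 0; rewrite Hsy // rmorph0 scale0r.
  - by move=> t t' [c Hc] [c' Hc']; exists (c + c'); rewrite rmorphD !scalerDl Hc Hc'.
  - move=> t t' [c Hc] [c' Hc']; exists (c' * c).
    by rewrite -scalerA Hc' scale_comm Hc scalerA rmorphM.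
have Hhom : forall m h, Sd m h -> (0 < m)%N -> h *: y = 0.
  move=> [//|m] h Hh _.
  have [c Hc] := Hall h.
  apply: (@graded_disj S Sd X Xd n m _ Hgm).
    rewrite Hc; have := Hmul 0%N n (phi c) y; rewrite add0r; apply => //.
    by apply/Hphi0; exists c.
  exact: Hmul.
have Hy0 : y = 0.
  apply: (Hq n Hn) => //.
  exists 1%N => rs Hsz Hrs.
  case: rs Hsz Hrs => [|t [|//]] // _ Hrs.
  rewrite big_seq1.
  have [N [f [Hf ->]]] := Hrs t (mem_head _ _).
  rewrite scaler_suml big_nat big1 // => i /andP [Hi _].
  by apply: Hhom.
by apply: HPa; apply/Hann.
Qed.
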